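(* Let $0<\delta<1$, let $X\subset\mathbb{R}^d$ be finite and $\delta$-separated, and let $K\ge1$. Then $X$ can be partitioned as $X=Y\sqcup Z$, with $Z=Z_1\sqcup\cdots\sqcup Z_N$, such that: (i) $\displaystyle\sup_{r\ge\delta,\ x\in\mathbb{R}^d}\frac{\#(B(x,r)\cap Y)}{r/\delta}\le K$; (ii) each $Z_i$ is contained in a ball of radius $r_i\gtrsim\delta K^{1/d}$, and each $Z_i$ has a subset $Z_i'$ with $\#Z_i'\sim r_i/\delta$ and $$\sup_{r\ge\delta,\ x\in\mathbb{R}^d}\frac{\#(B(x,r)\cap Z_i')}{r/\delta}\lessapprox 1.$$
   Context: $A\lesssim B$ means $A\le CB$ for a constant $C$ (allowed to depend on the dimension $d$); $A\sim B$ means $A\lesssim B$ and $B\lesssim A$; $A\lessapprox B$ means $A\lesssim|\log\delta|^{C'}B$ for an absolute constant $C'$. *)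

(* Defs.v *)
From mathcomp Require Import all_boot all_order all_algebra.
From mathcomp Require Import all_classical all_reals all_analysis.
Set Implicit Arguments. Unset Strict Implicit. Unset Printing Implicit Defensive.
Import Order.TTheory GRing.Theory Num.Theory.
Local Open Scope ring_scope.

Definition eucl_dist (R : realType) (d : nat) (x y : 'rV[R]_d) : R :=
  Num.sqrt (\sum_(i < d) (x ord0 i - y ord0 i) ^+ 2).

Definition nball (R : realType) (d : nat) (x : 'rV[R]_d) (r : R)
  (S : seq 'rV[R]_d) : nat :=
  count (fun y => eucl_dist x y <= r) S.

Definition delta_separated (R : realType) (d : nat) (delta : R)
  (X : seq 'rV[R]_d) : Prop :=
  uniq X /\ forall x y, x \in X -> y \in X -> x != y -> delta <= eucl_dist x y.

Definition ball_bound (R : realType) (d : nat) (delta M : R)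
  (S : seq 'rV[R]_d) : Prop :=
  forall (r : R) (x : 'rV[R]_d), delta <= r ->
    (nball x r S)%:R <= M * (r / delta).

(* Main.v *)
Require Import Defs.
From mathcomp Require Import all_boot all_order all_algebra.
From mathcomp Require Import all_classical all_reals all_analysis.
From mathcomp Require Import ring lra zify.
Set Implicit Arguments. Unset Strict Implicit. Unset Printing Implicit Defensive.
Import Order.TTheory GRing.Theory Num.Theory.
Local Open Scope ring_scope.

Section Geo.
Variables (R : realType) (d : nat).
Implicit Types x y z : 'rV[R]_d.

Lemma CS0 (a b : 'I_d -> R) (al be : R) :
  2 * al * be * (\sum_i a i * b i) <= be ^+ 2 * (\sum_i a i ^+ 2) + al ^+ 2 * (\sum_i b i ^+ 2).
Proof.
rewrite !mulr_sumr -big_split /=; apply: ler_sum => i _.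
have := sqr_ge0 (be * a i - al * b i); nra.
Qed.

Lemma sum_sq_eq0 (a : 'I_d -> R) : \sum_i a i ^+ 2 = 0 -> forall i, a i = 0.
Proof.
move=> H i; have /psumr_eq0P H2 : forall j, true -> 0 <= a j ^+ 2 by move=> j _; exact: sqr_ge0.
by move: (H2 H i isT) => /eqP; rewrite sqrf_eq0 => /eqP.
Qed.

Lemma CS (a b : 'I_d -> R) :
  \sum_i a i * b i <= Num.sqrt (\sum_i a i ^+ 2) * Num.sqrt (\sum_i b i ^+ 2).
Proof.
set A := \sum_i a i ^+ 2; set B := \sum_i b i ^+ 2.
have A0 : 0 <= A by apply: sumr_ge0 => i _; exact: sqr_ge0.
have B0 : 0 <= B by apply: sumr_ge0 => i _; exact: sqr_ge0.
have [Ae|Ap] := eqVneq A 0.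
  have Z := sum_sq_eq0 Ae; rewrite big1 ?mulr_ge0 ?sqrtr_ge0 // => i _; by rewrite Z mul0r.
have [Be|Bp] := eqVneq B 0.
  have Z := sum_sq_eq0 Be; rewrite big1 ?mulr_ge0 ?sqrtr_ge0 // => i _; by rewrite Z mulr0.
have := CS0 a b (Num.sqrt A) (Num.sqrt B).
rewrite -/A -/B !sqr_sqrtr //.
have aP : 0 < Num.sqrt A by rewrite sqrtr_gt0 lt_def Ap.
have bP : 0 < Num.sqrt B by rewrite sqrtr_gt0 lt_def Bp.
have E : A * B = (Num.sqrt A * Num.sqrt B) ^+ 2 by rewrite exprMn !sqr_sqrtr.
move: aP bP E; set al := Num.sqrt A; set be := Num.sqrt B; set S := \sum_i _ => aP bP E H.
have P : 0 < 2 * al * be by rewrite mulr_gt0 ?mulr_gt0.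
have H2 : (2 * al * be) * S <= (2 * al * be) * (al * be).
  apply: (le_trans H); rewrite [B * A]mulrC E; rewrite le_eqVlt; apply/orP; left; apply/eqP; ring.
by rewrite -(ler_pM2l P).
Qed.


Lemma dist_ge0 x y : 0 <= eucl_dist x y.
Proof. exact: sqrtr_ge0. Qed.

Lemma dist_sym x y : eucl_dist x y = eucl_dist y x.
Proof. rewrite /eucl_dist; congr Num.sqrt; apply: eq_bigr => i _; rewrite -sqrrN opprB //. Qed.

Lemma dist_xx x : eucl_dist x x = 0.
Proof. by rewrite /eucl_dist big1 ?sqrtr0 // => i _; rewrite subrr expr0n. Qed.

Lemma dist_coord x y i : `|x ord0 i - y ord0 i| <= eucl_dist x y.
Proof.
rewrite /eucl_dist -sqrtr_sqr ler_sqrt; last by apply: sumr_ge0 => j _; exact: sqr_ge0.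
rewrite (bigD1 i) //= lerDl; apply: sumr_ge0 => j _; exact: sqr_ge0.
Qed.

Lemma dist_tri x y z : eucl_dist x z <= eucl_dist x y + eucl_dist y z.
Proof.
rewrite /eucl_dist.
set u := fun i => x ord0 i - y ord0 i.
set v := fun i => y ord0 i - z ord0 i.
have E : \sum_i (x ord0 i - z ord0 i) ^+ 2 =
   \sum_i u i ^+ 2 + \sum_i v i ^+ 2 + 2 * \sum_i u i * v i.
  rewrite mulr_sumr -!big_split /=; apply: eq_bigr => i _; rewrite /u /v; ring.
rewrite E.
have A0 : 0 <= \sum_i u i ^+ 2 by apply: sumr_ge0 => i _; exact: sqr_ge0.
have B0 : 0 <= \sum_i v i ^+ 2 by apply: sumr_ge0 => i _; exact: sqr_ge0.
have C := CS u v.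
have -> : \sum_i (x ord0 i - y ord0 i) ^+ 2 = \sum_i u i ^+ 2 by [].
have -> : \sum_i (y ord0 i - z ord0 i) ^+ 2 = \sum_i v i ^+ 2 by [].
move: A0 B0 C; set A := \sum_i u i ^+ 2; set B := \sum_i v i ^+ 2; set S := \sum_i _ * _.
move=> A0 B0 C.
have aP := sqrtr_ge0 A; have bP := sqrtr_ge0 B.
rewrite -[Num.sqrt A + Num.sqrt B]ger0_norm ?addr_ge0 // -sqrtr_sqr ler_sqrt; last exact: sqr_ge0.
have EA := sqr_sqrtr A0; have EB := sqr_sqrtr B0.
nra.
Qed.


Lemma floor_close (s t : R) : Num.floor s = Num.floor t -> s < t + 1.
Proof.
move=> E; have h1 := floor_le t; have h2 := floorD1_gt s.
rewrite E intrD in h2; rewrite /= in h2; lra.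
Qed.

Lemma packing (delta r : R) (x : 'rV[R]_d) (V : seq 'rV[R]_d) :
  (0 < d)%N -> 0 < delta -> delta <= r -> uniq V ->
  (forall p q, p \in V -> q \in V -> p != q -> delta <= eucl_dist p q) ->
  (forall p, p \in V -> eucl_dist x p <= r) ->
  (size V)%:R <= (7 * d%:R * r / delta) ^+ d.
Proof.
move=> d0 dp dr uV sep inB.
have dR : 1 <= (d%:R : R) by rewrite ler1n.
set a := delta / (2 * d%:R).
have ap : 0 < a by rewrite /a divr_gt0 ?mulr_gt0 // ltr0n.
have r0 : 0 <= r / a by rewrite divr_ge0 // ?ltW //; lra.
set N := (Num.trunc (r / a)).+1.
have [_ NP] := andP (truncn_itv r0).
rewrite -/N in NP.
have NP2 : (N%:R : R) <= r / a + 1.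
  have [h _] := andP (truncn_itv r0); by rewrite /N -addn1 natrD; lra.
pose t (p : 'rV[R]_d) i := (p ord0 i - x ord0 i) / a.
pose k (p : 'rV[R]_d) i : int := Num.floor (t p i) + N%:Z.
have tB : forall p i, p \in V -> `|t p i| <= r / a.
  move=> p i pV; rewrite /t normrM [`|a^-1|]ger0_norm; last by rewrite invr_ge0 ltW.
  apply: ler_wpM2r; first by rewrite invr_ge0 ltW.
  by rewrite distrC; apply: le_trans (dist_coord _ _ _) (inB p pV).
have kB : forall p i, p \in V -> (0 <= k p i)%R /\ (`|k p i| < (2 * N).+1)%N.
  move=> p i pV; have := tB p i pV; rewrite ler_norml => /andP [h1 h2].
  have f1 := floor_le (t p i); have f2 := floorD1_gt (t p i).
  rewrite intrD /= in f2.
  have k0 : (0 <= k p i)%R.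
    have : ((-1 : int)%:~R : R) < (k p i)%:~R.
      rewrite /k intrD /=. rewrite -[((N%:Z)%:~R)]/((N%:R : R)). lra.
    rewrite ltr_int; lia.
  split=> //.
  rewrite ltnS -(lez_nat) gez0_abs // -(ler_int R) /k intrD /=.
  rewrite -[((N%:Z)%:~R)]/((N%:R : R)).
  have -> : (((2 * N)%N : int)%:~R : R) = 2 * N%:R by rewrite -[LHS]/(((2 * N)%N)%:R : R) natrM.
  lra.
pose F (p : 'rV[R]_d) : {ffun 'I_d -> 'I_(2 * N).+1} := [ffun i => inord `|k p i|%N].
have Finj : {in V &, injective F}.
  move=> p q pV qV E; apply/eqP; apply: contraT => pq.
  have := sep p q pV qV pq.
  suff : eucl_dist p q < delta by lra.
  have ci : forall i, `|p ord0 i - q ord0 i| <= a.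
    move=> i; have := congr1 (fun f : {ffun 'I_d -> 'I_(2 * N).+1} => f i) E; rewrite /F !ffunE => /(congr1 (@nat_of_ord _)).
    have [k1 kb1] := kB p i pV; have [k2 kb2] := kB q i qV.
    rewrite !inordK // => /(congr1 (fun n : nat => n%:Z)); rewrite !gez0_abs // /k => /addIr Ef.
    have h1 := floor_close Ef; have h2 := floor_close (esym Ef).
    rewrite /t in h1 h2.
    have h3 : `|(p ord0 i - x ord0 i) / a - (q ord0 i - x ord0 i) / a| <= 1 by rewrite ler_norml; apply/andP; split; lra.
    have -> : p ord0 i - q ord0 i = ((p ord0 i - x ord0 i) / a - (q ord0 i - x ord0 i) / a) * a.
      by field; rewrite gt_eqF.
    by rewrite normrM (gtr0_norm ap); rewrite -[X in _ <= X]mul1r; apply: ler_wpM2r => //; exact: ltW.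
  have S : \sum_i (p ord0 i - q ord0 i) ^+ 2 <= d%:R * a ^+ 2.
    apply: le_trans (_ : \sum_(i < d) a ^+ 2 <= _).
      apply: ler_sum => i _; have := ci i; rewrite ler_norml => /andP [h1 h2]; nra.
    by rewrite sumr_const card_ord mulr_natl.
  have S2 : d%:R * a ^+ 2 < delta ^+ 2.
    rewrite /a expr_div_n exprMn.
    have dp' : 0 < (d%:R : R) by lra.
    rewrite mulrA [d%:R * _]mulrC -mulrA -[X in _ < X]mulr1 ltr_pM2l ?exprn_gt0 //.
    rewrite ltr_pdivrMr ?mulr_gt0 ?exprn_gt0 //; nra.
  rewrite /eucl_dist -[delta]gtr0_norm // -sqrtr_sqr ltr_sqrt ?exprn_gt0 //.
  exact: le_lt_trans S S2.
have C1 : (size V <= ((2 * N).+1) ^ d)%N.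
  rewrite -(size_map F) -(card_uniqP _) ?map_inj_in_uniq //.
  by apply: leq_trans (max_card _) _; rewrite card_ffun !card_ord.
apply: le_trans (_ : (((2 * N).+1) ^ d)%:R <= _); first by rewrite ler_nat.
rewrite natrX; apply: lerXn2r; rewrite ?nnegrE ?ler0n //.
  by rewrite divr_ge0 ?mulr_ge0 ?ler0n // ltW //; lra.
have ra : r / a = 2 * d%:R * r / delta.
  by rewrite /a; field; rewrite ?gt_eqF //; lra.
have drd : 1 <= d%:R * r / delta.
  by rewrite ler_pdivlMr // mul1r; nra.
rewrite -addn1 natrD natrM; rewrite ra in NP2.
have -> : 7 * d%:R * r / delta = 7 * (d%:R * r / delta) by rewrite !mulrA.
rewrite (_ : 2 * d%:R * r / delta = 2 * (d%:R * r / delta)) in NP2; last by rewrite !mulrA.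
lra.
Qed.

End Geo.

Section Comb.
Variables (R : realType) (d : nat) (delta : R).
Hypothesis dp : 0 < delta.
Notation pt := ('rV[R]_d).
Ltac Lra := let h := fresh in have h := dp; lra.

Lemma nbb (M : R) (S : seq pt) : ~ ball_bound delta M S ->
  exists r x, delta <= r /\ M * (r / delta) < (nball x r S)%:R.
Proof.
move=> H; apply: contrapT => H2; apply: H => r x hr; rewrite leNgt; apply/negP => h.
by apply: H2; exists r, x.
Qed.

Lemma bb_nil M : 0 <= M -> @ball_bound R d delta M [::].
Proof.
move=> M0 r x hr; rewrite /nball /=.
have h : 0 <= r / delta by apply: divr_ge0; Lra.
exact: mulr_ge0.
Qed.

Fixpoint sel (V : seq pt) : seq pt :=
  match V with
  | [::] => [::]
  | p :: V' => let S := sel V' in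
      if `[< ball_bound delta 2 (p :: S) >] then p :: S else S
  end.

Lemma sel_sub V : subseq (sel V) V.
Proof.
elim: V => [|p V IH] //=.
case: asboolP => _; first by rewrite eqxx.
by apply: subseq_trans IH (subseq_cons _ _).
Qed.

Lemma sel_bb V : ball_bound delta 2 (sel V).
Proof.
elim: V => [|p V IH] /=; first exact: bb_nil.
by case: asboolP.
Qed.

Lemma sel_rej V p : p \in V -> p \notin sel V ->
  exists y s, [/\ delta <= s, eucl_dist y p <= s & s / delta <= (nball y s (sel V))%:R].
Proof.
elim: V => [|p' V IH] //=.
have [bb|nb] := asboolP (ball_bound delta 2 (p' :: sel V)).
  rewrite inE => /orP [/eqP ->|pV]; first by rewrite inE eqxx.
  rewrite inE negb_or => /andP [_ nin].
  have [y [s [h1 h2 h3]]] := IH pV nin.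
  exists y, s; split => //; apply: le_trans h3 _; rewrite ler_nat /nball /=; lia.
rewrite inE => /orP [/eqP ->|pV] nin; last exact: IH.
have [r [x [hr hlt]]] := nbb nb.
have hS := sel_bb V x hr.
move: hlt hS; rewrite /nball /=.
have h1 : 1 <= r / delta by rewrite ler_pdivlMr // mul1r.
case: (boolP (eucl_dist x p' <= r)) => hp; last by rewrite add0n; Lra.
rewrite natrD /= => hlt hS.
exists x, r; split => //; Lra.
Qed.

Lemma exmax (T : eqType) (f : T -> R) (P : seq T) : P != [::] ->
  exists2 p0, p0 \in P & forall p, p \in P -> f p <= f p0.
Proof.
elim: P => [|a P IH] // _.
have [->|nP] := eqVneq P [::].
  by exists a; rewrite ?inE ?eqxx // => p; rewrite inE => /eqP ->.
have [b bP bM] := IH nP.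
have [ab|ba] := leP (f a) (f b).
  exists b; first by rewrite inE bP orbT.
  by move=> p; rewrite inE => /orP [/eqP ->|/bM].
exists a; first by rewrite inE eqxx.
move=> p; rewrite inE => /orP [/eqP -> //|/bM h]; apply: le_trans h _; exact: ltW.
Qed.

Lemma vitali (M : R) (W S : seq pt) (y : pt -> pt) (s : pt -> R) n (P : seq pt) :
  (size P < n)%N -> 0 <= M ->
  (forall z t, delta <= t -> (nball z t W)%:R <= M * (t / delta)) ->
  uniq P -> {subset P <= W} ->
  (forall p, p \in P -> [/\ delta <= s p, eucl_dist (y p) p <= s p &
       s p / delta <= (nball (y p) (s p) S)%:R]) ->
  (size P)%:R <= 3 * M * (count (fun q => has (fun p => eucl_dist (y p) q <= s p) P) S)%:R.
Proof.
elim: n P => [|n IHn] P //= sz M0 HW uP PW HP.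
have [->|nP] := eqVneq P [::].
  by rewrite /= mulr_ge0 ?mulr_ge0.
have [p0 p0P p0M] := exmax s nP.
set B0 := fun q => eucl_dist (y p0) q <= s p0.
set a := fun p => has (fun q => (eucl_dist (y p) q <= s p) && B0 q) S.
set P1 := seq.filter a P; set P2 := seq.filter (predC a) P.
have [h01 h02 h03] := HP p0 p0P.
have ap0 : a p0.
  rewrite /a; apply/hasP.
  have : (0 < nball (y p0) (s p0) S)%N.
    rewrite -(ltr_nat R); apply: lt_le_trans h03; apply: divr_gt0 => //; Lra.
  rewrite /nball -has_count => /hasP [q qS qB]; exists q => //; rewrite qB.
  exact: qB.
have szP : size P = (size P1 + size P2)%N by rewrite !size_filter count_predC.
have sz2 : (size P2 < n)%N.
  have : (0 < size P1)%N by rewrite size_filter -has_count; apply/hasP; exists p0.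
  lia.
have P2sub : forall p, p \in P2 -> p \in P by move=> p; rewrite mem_filter => /andP [].
have P1sub : forall p, p \in P1 -> a p /\ p \in P by move=> p; rewrite mem_filter => /andP [].
have IH2 := IHn P2 sz2 M0 HW (filter_uniq _ uP)
  (fun p pP => PW p (P2sub p pP)) (fun p pP => HP p (P2sub p pP)).
have S1 : (size P1 <= nball (y p0) (3 * s p0) W)%N.
  rewrite /nball -size_filter; apply: uniq_leq_size; first exact: filter_uniq.
  move=> p pP1; have [ap pP] := P1sub p pP1; rewrite mem_filter PW // andbT.
  move: ap => /hasP [q qS /andP [hq1 hq2]].
  have [hp1 hp2 hp3] := HP p pP; have := p0M p pP.
  have t1 := dist_tri (y p0) q p; have t2 := dist_tri q (y p) p.
  rewrite (dist_sym q (y p)) in t2; move: hq2; rewrite /B0 => hq2 h4; Lra.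
have S1' : (size P1)%:R <= 3 * M * (nball (y p0) (s p0) S)%:R.
  apply: le_trans (_ : M * (3 * s p0 / delta) <= _).
    apply: le_trans (_ : (nball (y p0) (3 * s p0) W)%:R <= _); first by rewrite ler_nat.
    apply: HW; Lra.
  rewrite (_ : M * (3 * s p0 / delta) = 3 * M * (s p0 / delta)); last by ring.
  apply: ler_wpM2l; [Lra|exact: h03].
set U2 := fun q => has (fun p => eucl_dist (y p) q <= s p) P2.
set U := fun q => has (fun p => eucl_dist (y p) q <= s p) P.
have C0 : (count B0 S + count U2 S = count (predU B0 U2) S)%N.
  rewrite -count_predUI.
  rewrite (@eq_in_count _ (predI B0 U2) pred0); first by rewrite count_pred0 addn0.
  move=> q qS /=; apply/negP => /andP [qB /hasP [p pP2 hp]].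
  move: pP2; rewrite mem_filter => /andP [/negP na _]; apply: na.
  by apply/hasP; exists q => //; rewrite hp.
have C1 : (count (predU B0 U2) S <= count U S)%N.
  apply: sub_count => q /orP [qB|/hasP [p pP2 hp]]; apply/hasP.
    by exists p0.
  by exists p; [exact: P2sub|].
rewrite szP natrD.
apply: le_trans (_ : 3 * M * (count B0 S)%:R + 3 * M * (count U2 S)%:R <= _).
  exact: lerD.
rewrite -mulrDr -natrD C0; apply: ler_wpM2l; first by Lra.
by rewrite ler_nat.
Qed.

Lemma powR_root (K y : R) : (0 < d)%N -> 0 <= K -> 0 <= y -> K <= y ^+ d ->
  K `^ (d%:R^-1) <= y.
Proof.
move=> d0 K0 y0 Ky.
have dR : (0 : R) < d%:R by rewrite ltr0n.
have dI : (0 : R) <= d%:R^-1 by rewrite invr_ge0 ltW.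
have h := @ge0_ler_powR R (d%:R^-1) dI K (y ^+ d).
rewrite !nnegrE in h.
apply: le_trans (h K0 (exprn_ge0 _ y0) Ky) _.
rewrite -powR_mulrn // -powRrM mulfV ?powRr1 // pnatr_eq0 -lt0n //.
Qed.

Definition sepd (W : seq pt) := forall p q, p \in W -> q \in W -> p != q -> delta <= eucl_dist p q.

Definition good (K : R) (Zi : seq pt) :=
  exists (ri : R) (ci : pt) (Zi' : seq pt),
    [/\ (7 * d%:R)^-1 * delta * K `^ (d%:R^-1) <= ri,
        (forall z, z \in Zi -> eucl_dist ci z <= ri),
        subseq Zi' Zi,
        8^-1 * (ri / delta) <= (size Zi')%:R /\ (size Zi')%:R <= 2 * (ri / delta)
      & ball_bound delta (2 * `|ln delta| `^ 0) Zi'].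

Lemma decomp (K : R) (d0 : (0 < d)%N) (K1 : 1 <= K) n : forall W : seq pt,
  (size W < n)%N -> uniq W -> sepd W ->
  exists Y Z, perm_eq W (Y ++ flatten Z) /\ ball_bound delta K Y /\
    forall Zi, Zi \in Z -> good K Zi.
Proof.
elim: n => [|n IHn] W //= szW uW sW.
have [bb|nb] := asboolP (ball_bound delta K W).
  by exists W, [::]; rewrite cats0 perm_refl.
have [r0 [x0 [hr0 hlt0]]] := nbb nb.
pose E : set R := fun t => exists z s, delta <= s /\ t = (nball z s W)%:R * delta / s.
have hE : has_sup E.
  split.
    by exists ((nball x0 r0 W)%:R * delta / r0), x0, r0.
  exists (size W)%:R => t [z [s' [hs ->]]].
  have s0 : 0 < s' by Lra.
  rewrite ler_pdivrMr //.
  have : ((nball z s' W)%:R : R) <= (size W)%:R by rewrite ler_nat /nball count_size.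
  have : (0 : R) <= (nball z s' W)%:R by rewrite ler0n.
  move=> h1 h2; Lra || nra.
set M := sup E.
have HW : forall z t, delta <= t -> (nball z t W)%:R <= M * (t / delta).
  move=> z t ht; have Et : E ((nball z t W)%:R * delta / t) by exists z, t.
  have := sup_upper_bound hE Et; rewrite -/M => h.
  have t0 : 0 < t by Lra.
  rewrite (_ : ((nball z t W)%:R : R) = (nball z t W)%:R * delta / t * (t / delta)); last first.
    by field; apply/andP; split; rewrite gt_eqF.
  apply: ler_wpM2r => //; apply: divr_ge0; Lra.
have MK : K < M.
  have Et : E ((nball x0 r0 W)%:R * delta / r0) by exists x0, r0.
  apply: lt_le_trans (sup_upper_bound hE Et).
  have r00 : 0 < r0 by Lra.
  rewrite ltr_pdivlMr // -ltr_pdivrMr //.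
  by rewrite -mulrA.
have eps0 : 0 < (M - K) / 2 by apply: divr_gt0; Lra.
have [e Ee eM] := sup_adherent eps0 hE.
rewrite -/M in eM.
have eleM : e <= M by have := sup_upper_bound hE Ee.
case: Ee => x [r [hr ->]] in eM eleM.
have r00 : 0 < r by Lra.
set B := fun q => eucl_dist x q <= r.
set V := seq.filter B W.
set W' := seq.filter (predC B) W.
set nn := nball x r W.
have nnV : size V = nn by rewrite size_filter.
have nnE : (nn%:R : R) = (nn%:R * delta / r) * (r / delta).
  by field; apply/andP; split; rewrite gt_eqF.
set e0 := nn%:R * delta / r in eM eleM nnE.
have rd1 : 1 <= r / delta by rewrite ler_pdivlMr // mul1r.
have nnK : K * (r / delta) < nn%:R.
  have rdp : 0 < r / delta by apply: divr_gt0; Lra.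
  rewrite nnE ltr_pM2r //; Lra.
have M0 : 0 <= M by Lra.
have uV : uniq V := filter_uniq _ uW.
have VW : forall p, p \in V -> p \in W /\ B p by move=> p; rewrite mem_filter => /andP [].
have sV : sepd V.
  by move=> p q pV qV; apply: sW; [exact: (VW p pV).1 | exact: (VW q qV).1].
set S := sel V.
have sSV : subseq S V := sel_sub V.
have uS := subseq_uniq sSV uV.
have SV : forall p, p \in S -> p \in V := mem_subseq sSV.
set P := seq.filter (fun p => p \notin S) V.
have Hrej : forall p, exists ys : pt * R, p \in P -> [/\ delta <= ys.2,
   eucl_dist ys.1 p <= ys.2 & ys.2 / delta <= (nball ys.1 ys.2 S)%:R].
  move=> p; case: (boolP (p \in P)) => pP; last by exists (x, r).
  move: (pP); rewrite mem_filter => /andP [pnS pV].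
  have [y [s' H]] := sel_rej pV pnS; by exists (y, s').
have [f Hf] := choice Hrej.
have PV : forall p, p \in P -> p \in V by move=> p; rewrite mem_filter => /andP [].
have HV := @vitali M W S (fun p => (f p).1) (fun p => (f p).2) (size P).+1 P (ltnSn _) M0 HW
  (filter_uniq _ uV) (fun p pP => (VW p (PV p pP)).1) (fun p pP => Hf p pP).
have HV2 : (size P)%:R <= 3 * M * (size S)%:R.
  apply: le_trans HV _; apply: ler_wpM2l; first by Lra.
  by rewrite ler_nat count_size.
have cS : count (mem S) V = size S.
  rewrite -size_filter; apply: perm_size; apply: uniq_perm.
  - exact: filter_uniq.
  - exact: uS.
  move=> q; rewrite mem_filter; case: (boolP (q \in S)) => qS.
    by apply/andP; split => //; exact: SV.
  by apply/negbTE/negP => /andP [h _]; move/negP: qS; apply.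
have szV : size V = (size S + size P)%N.
  by rewrite -(count_predC (mem S) V) cS size_filter.
have Sup : (size S)%:R <= 2 * (r / delta).
  have := sel_bb V x hr; rewrite -/S /nball.
  rewrite (@eq_in_count _ _ predT) ?count_predT //.
  by move=> q qS; have [_ ] := VW q (SV q qS).
have Slow : 8^-1 * (r / delta) <= (size S)%:R.
  have h1 : (nn%:R : R) <= (1 + 3 * M) * (size S)%:R.
    by rewrite -nnV szV natrD; Lra.
  have h2 : (nn%:R : R) = e0 * (r / delta) by [].
  have h3 : M / 2 <= e0 by Lra.
  have rdp : 0 < r / delta by apply: divr_gt0; Lra.
  have h4 : M / 2 * (r / delta) <= (1 + 3 * M) * (size S)%:R.
    apply: le_trans h1; rewrite h2; apply: ler_wpM2r; Lra.
  have S0 : (0 : R) <= (size S)%:R by rewrite ler0n.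
  nra.
have rdp : 0 < r / delta by apply: divr_gt0; Lra.
have Pk := @packing R d delta r x V d0 dp hr uV sV (fun p pV => (VW p pV).2).
have Kle : K <= (7 * d%:R * r / delta) ^+ d.
  apply: le_trans Pk; rewrite nnV; apply: le_trans (ltW nnK).
  by rewrite -[X in X <= _]mulr1 ler_wpM2l //; Lra.
have c1 : (7 * d%:R)^-1 * delta * K `^ (d%:R^-1) <= r.
  have dR : (0 : R) < d%:R by rewrite ltr0n.
  have h := powR_root d0 (_ : 0 <= K) (_ : 0 <= 7 * d%:R * r / delta) Kle.
  have h' : K `^ (d%:R^-1) <= 7 * d%:R * r / delta.
    apply: h; [Lra | by apply: divr_ge0; [rewrite !mulr_ge0 //; Lra | Lra]].
  apply: le_trans (_ : (7 * d%:R)^-1 * delta * (7 * d%:R * r / delta) <= r).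
    apply: ler_wpM2l h'; apply: mulr_ge0; [rewrite invr_ge0; Lra | Lra].
  have h7 : (7 * d%:R : R) != 0 by rewrite gt_eqF // mulr_gt0.
  have hd : delta != 0 by rewrite gt_eqF.
  rewrite le_eqVlt; apply/orP; left; apply/eqP.
  field; rewrite hd /= gt_eqF //.
have gV : good K V.
  exists r, x, S; split => //.
  - by move=> z zV; exact: (VW z zV).2.
  - by rewrite powRr0 mulr1; exact: sel_bb.
have szW' : (size W' < n)%N.
  have e1 : size W = (size V + size W')%N by rewrite !size_filter count_predC.
  have e2 : (0 < size V)%N.
    rewrite nnV -(ltr_nat R); apply: le_lt_trans nnK; apply: mulr_ge0; Lra.
  clear -e1 e2 szW; lia.
have W'W : forall p, p \in W' -> p \in W by move=> p; rewrite mem_filter => /andP [].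
have [Y [Z [pY [bY gZ]]]] := IHn W' szW' (filter_uniq _ uW)
  (fun p q pW qW => sW p q (W'W p pW) (W'W q qW)).
exists Y, (V :: Z); split; last split => //.
  apply: (@perm_trans _ (V ++ Y ++ flatten Z)); last by rewrite perm_catCA.
  rewrite -(perm_filterC B W) perm_cat2l; exact: pY.
move=> Zi; rewrite inE => /orP [/eqP -> //|]; exact: gZ.
Qed.

End Comb.

Theorem lemma3p2 (R : realType) :
  exists Cexp : R, 0 <= Cexp /\
  forall d : nat, (0 < d)%N ->
  exists c1 c2 C2 C3 : R, [/\ 0 < c1, 0 < c2, 0 < C2 & 0 < C3] /\
  forall (delta : R) (X : seq 'rV[R]_d) (K : R),
    0 < delta -> delta < 1 -> delta_separated delta X -> 1 <= K ->
    exists (Y : seq 'rV[R]_d) (Z : seq (seq 'rV[R]_d)),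
      perm_eq X (Y ++ flatten Z) /\
      ball_bound delta K Y /\
      (forall Zi, Zi \in Z ->
         exists (ri : R) (ci : 'rV[R]_d) (Zi' : seq 'rV[R]_d),
           [/\ c1 * delta * K `^ (d%:R^-1) <= ri,
               (forall z, z \in Zi -> eucl_dist ci z <= ri),
               subseq Zi' Zi,
               c2 * (ri / delta) <= (size Zi')%:R /\
                 (size Zi')%:R <= C2 * (ri / delta)
             & ball_bound delta (C3 * `|ln delta| `^ Cexp) Zi']).
Proof.
exists 0; split => // d d0.
exists (7 * d%:R)^-1, 8^-1, 2, 2; split.
  split => //.
  have h7 : (0 : R) < 7 * d%:R by rewrite mulr_gt0 // ltr0n.
  have := h7; rewrite -invr_gt0; exact.
move=> delta X K dp _ [uX sX] K1.
have [Y [Z [pY [bY gZ]]]] := @decomp R d delta dp K d0 K1 (size X).+1 X (ltnSn _) uX sX.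
exists Y, Z; split => //; split => // Zi ZiZ.
Qed.
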